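(* Let $\Gamma=(V,E)$ be a finite multigraph without loops, with arc set $A=A(\Gamma)$, and let $U=SC'$ be a flip-flop coined QW on $\mathcal{H}_A$ whose coin is $C'=\bigoplus_{v\in V}C_v$, where each $C_v=2\ket{\alpha^{(v)}}\bra{\alpha^{(v)}}-I_{\mathcal{H}_v}$ is a generalized Grover operator on $\mathcal{H}_v=\mathrm{span}\{\ket{a}:o(a)=v\}$ with $\ket{\alpha^{(v)}}\in\mathcal{H}_v$ a unit vector. Let $S(\Gamma)$ be the subdivision graph of $\Gamma$, viewed as the bipartite graph with parts $X=V$ and $Y=E$, and let $\mathcal{U}_\eta:\mathcal{H}_A\to\mathcal{H}_{E(S(\Gamma))}$ be the unitary defined by $\mathcal{U}_\eta\ket{a}=\ket{o(a)}\otimes\ket{\{a,\bar a\}}$. Then there is an extended Szegedy walk with evolution operator $W$ on $\mathcal{H}^{|V|}\otimes\mathcal{H}^{|E|}$ for the bipartite graph $S(\Gamma)$ such that $$U=\mathcal{U}_\eta^{-1}\,W|_{\mathcal{H}_{E(S(\Gamma))}}\,\mathcal{U}_\eta .$$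
   Context: Multigraph and arcs: each edge $e\in E$ is identified with a pair of opposite arcs $\{a,\bar a\}$; $A$ is the set of all such arcs, $o(a),t(a)\in V$ denote origin and terminal vertex of $a$, with $o(\bar a)=t(a)$, $t(\bar a)=o(a)$. $\mathcal{H}_A$ is the Hilbert space with orthonormal basis $\{\ket{a}:a\in A\}$ (equivalently the basis $\ket{v,j}$, $v\in V$, $0\le j<d_v$, one vector per vertex and incident edge-end). Flip-flop coined QW: $U=SC'$ with shift $S\ket{a}=\ket{\bar a}$ and coin $C'$ a direct sum of operators $C_v$ on the subspaces $\mathcal{H}_v=\mathrm{span}\{\ket{a}:o(a)=v\}$. A generalized Grover operator on $\mathcal{H}_v$ is $2\ket{\psi}\bra{\psi}-I_{\mathcal{H}_v}$ for a unit vector $\ket{\psi}\in\mathcal{H}_v$. Subdivision graph $S(\Gamma)$: vertex set $V\cup E$, edge set $\{\{v,e\}: v\in V, e\in E, v\in e\}$ (a new vertex is inserted in the middle of each edge); it is bipartite with parts $X=V$, $Y=E$, and $\mathcal{H}_{E(S(\Gamma))}$ denotes the subspace of $\mathcal{H}^{|V|}\otimes\mathcal{H}^{|E|}$ spanned by $\{\ket{v}\otimes\ket{e}: v\in e\}$. Extended Szegedy QW on a connected bipartite graph $(X,Y,E')$ with biadjacency matrix $M$: take right-stochastic $P=(p_{xy})_{x\in X,y\in Y}$ and $Q=(q_{yx})_{y\in Y,x\in X}$ with $M_{x,y}=0\Rightarrow p_{xy}=q_{yx}=0$, real phases $\theta_{xy},\theta'_{xy}$, vectors $\ket{\phi_x}=\sum_{y}\sqrt{p_{xy}}e^{i\theta_{xy}}\ket{x}\otimes\ket{y}$,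 $\ket{\psi_y}=\sum_x\sqrt{q_{yx}}e^{i\theta'_{xy}}\ket{x}\otimes\ket{y}$ in $\mathcal{H}^{|X|}\otimes\mathcal{H}^{|Y|}$, and $W=R_1R_0$ with $R_0=2\sum_x\ket{\phi_x}\bra{\phi_x}-I$, $R_1=2\sum_y\ket{\psi_y}\bra{\psi_y}-I$. *)

(* Defs.v *)
From HB Require Import structures.
From mathcomp Require Import all_boot all_order all_algebra.
From mathcomp Require Import complex.
From mathcomp Require Import reals trigo.
Set Implicit Arguments.
Unset Strict Implicit.
Unset Printing Implicit Defensive.
Import Order.TTheory GRing.Theory Num.Theory.
Local Open Scope ring_scope.
Local Open Scope complex_scope.

(* A vector of the Hilbert space with orthonormal basis {|i> : i in I}
   is given by its coordinates; an operator H_J -> H_I by its matrix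
   entries  M i j = <i|M|j>. *)
Definition vec (R : realType) (I : finType) := I -> R[i].
Definition op (R : realType) (I J : finType) := I -> J -> R[i].

Definition opmul (R : realType) (I J K : finType) (M : op R I J) (N : op R J K)
  : op R I K := fun i k => \sum_(j : J) M i j * N j k.
Definition opid (R : realType) (I : finType) : op R I I :=
  fun i j => (i == j)%:R.
Definition adjoint (R : realType) (I J : finType) (M : op R I J) : op R J I :=
  fun j i => (M i j)^*.
Definition opapply (R : realType) (I J : finType) (M : op R I J) (v : vec R J)
  : vec R I := fun i => \sum_(j : J) M i j * v j.
Definition sum_ketbra (R : realType) (X I : finType) (phi : X -> vec R I)
  : op R I I := fun i j => \sum_(x : X) phi x i * (phi x j)^*.
Definition reflection (R : realType) (I : finType) (P : op R I I) : op R I I :=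
  fun i j => 2 * P i j - opid R i j.

(* A : arcs, o : origin, rev : a |-> bar a, edge : a |-> {a, bar a} in E.
   t(a) := o (rev a). *)
Definition loopless_multigraph (V E A : finType)
  (o : A -> V) (rev : A -> A) (edge : A -> E) : Prop :=
  [/\ involutive rev,
      (forall a, o (rev a) != o a),
      (forall a b, edge a = edge b <-> (b = a \/ b = rev a)) &
      (forall e, exists a, edge a = e)].

Definition unit_vector_at (R : realType) (V A : finType) (o : A -> V)
  (v : V) (alpha : vec R A) : Prop :=
  (forall a, o a != v -> alpha a = 0) /\
  \sum_(a | o a == v) `|alpha a| ^+ 2 = 1.

(* C_v = 2|alpha^(v)><alpha^(v)| - I_{H_v}, as an operator on H_v (a, b with o a = o b = v) *)
Definition grover_at (R : realType) (V A : finType) (alpha : V -> vec R A) (v : V)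
  : op R A A := fun a b => 2 * (alpha v a * (alpha v b)^*) - (a == b)%:R.

Definition coin (R : realType) (V A : finType) (o : A -> V) (alpha : V -> vec R A)
  : op R A A := fun a b => if o a == o b then grover_at alpha (o a) a b else 0.

Definition shift (R : realType) (A : finType) (rev : A -> A) : op R A A :=
  fun a b => (a == rev b)%:R.

Definition flipflop_QW (R : realType) (V A : finType) (o : A -> V) (rev : A -> A)
  (alpha : V -> vec R A) : op R A A :=
  opmul (shift R rev) (coin o alpha).

Definition sub_incident (V E A : finType) (o : A -> V) (edge : A -> E)
  (v : V) (e : E) : bool := [exists a, (o a == v) && (edge a == e)].

(* H_{E(S(Gamma))} = span{|v> (x) |e> : v in e} inside H^{|V|} (x) H^{|E|} *)
Definition in_HES (R : realType) (V E A : finType) (o : A -> V) (edge : A -> E)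
  (psi : vec R (V * E)%type) : Prop :=
  forall v e, psi (v, e) != 0 -> sub_incident o edge v e.

Definition U_eta (R : realType) (V E A : finType) (o : A -> V) (edge : A -> E)
  : op R (V * E)%type A :=
  fun p a => ((p.1 == o a) && (p.2 == edge a))%:R.

Definition right_stochastic (R : realType) (X Y : finType) (P : X -> Y -> R) : Prop :=
  (forall x y, 0 <= P x y) /\ (forall x, \sum_(y : Y) P x y = 1).

Definition phase (R : realType) (t : R) : R[i] := cos t +i* sin t.

Definition sz_phi (R : realType) (X Y : finType) (P : X -> Y -> R)
  (theta : X -> Y -> R) (x : X) : vec R (X * Y)%type :=
  fun p => if p.1 == x then (Num.sqrt (P x p.2))%:C * phase (theta x p.2) else 0.

Definition sz_psi (R : realType) (X Y : finType) (Q : Y -> X -> R)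
  (theta' : X -> Y -> R) (y : Y) : vec R (X * Y)%type :=
  fun p => if p.2 == y then (Num.sqrt (Q y p.1))%:C * phase (theta' p.1 y) else 0.

Definition szegedy_W (R : realType) (X Y : finType) (P : X -> Y -> R) (Q : Y -> X -> R)
  (theta theta' : X -> Y -> R) : op R (X * Y)%type (X * Y)%type :=
  opmul (reflection (sum_ketbra (sz_psi Q theta')))
        (reflection (sum_ketbra (sz_phi P theta))).

Definition is_extended_szegedy_W (R : realType) (X Y : finType) (M : X -> Y -> bool)
  (W : op R (X * Y)%type (X * Y)%type) : Prop :=
  exists (P : X -> Y -> R) (Q : Y -> X -> R) (theta theta' : X -> Y -> R),
    [/\ right_stochastic P, right_stochastic Q,
        (forall x y, ~~ M x y -> P x y = 0 /\ Q y x = 0) &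
        W = szegedy_W P Q theta theta'].

(* Main.v *)
Require Import Defs.
From HB Require Import structures.
From mathcomp Require Import all_boot all_order all_algebra.
From mathcomp Require Import complex.
From mathcomp Require Import reals trigo.
From mathcomp Require Import ring lra.
From Stdlib Require Import FunctionalExtensionality.
Import Order.TTheory GRing.Theory Num.Theory.
Local Open Scope ring_scope.
Local Open Scope complex_scope.

Definition argR (R : realType) (z : R[i]) : R :=
  let r := Num.sqrt (complex.Re z ^+ 2 + complex.Im z ^+ 2) in
  if 0 <= complex.Im z then acos (complex.Re z / r) else - acos (complex.Re z / r).

Arguments argR {R}.

Lemma phaseK (R : realType) (z : R[i]) :
  (Num.sqrt (complex.Re z ^+ 2 + complex.Im z ^+ 2))%:C * phase (argR z) = z.
Proof.
case: z => a b /=; rewrite /argR /=.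
have [h0|hn0] := eqVneq (a ^+ 2 + b ^+ 2) 0.
  rewrite h0 sqrtr0 mul0r.
  move/eqP: h0; rewrite paddr_eq0 ?sqr_ge0 // !sqrf_eq0 => /andP[/eqP-> /eqP->].
  by [].
set r := Num.sqrt _.
have r0 : 0 <= r by exact: sqrtr_ge0.
have rn0 : r != 0 by rewrite /r sqrtr_eq0 -ltNge lt_def hn0 addr_ge0 ?sqr_ge0.
have rp : 0 < r by rewrite lt_def rn0.
have r2 : r ^+ 2 = a ^+ 2 + b ^+ 2 by rewrite sqr_sqrtr // addr_ge0 ?sqr_ge0.
have hx : -1 <= a / r <= 1.
  rewrite -ler_norml normrM normfV (gtr0_norm rp) ler_pdivrMr // mul1r.
  rewrite -sqrtr_sqr /r ler_sqrt ?addr_ge0 ?sqr_ge0 //.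
  by rewrite lerDl sqr_ge0.
have hs : sin (acos (a / r)) = `|b| / r.
  rewrite sin_acos //.
  have -> : 1 - (a / r) ^+ 2 = (b / r) ^+ 2.
    apply: (mulIf (expf_neq0 2 rn0)); rewrite mulrBl !expr_div_n !divfK ?expf_neq0 // r2; ring.
  by rewrite sqrtr_sqr normrM normfV (gtr0_norm rp).
have hc : cos (acos (a / r)) = a / r by rewrite acosK // in_itv /=.
rewrite /phase; case: ifP => hb.
  rewrite hc hs ger0_norm //.
  apply/eqP; rewrite eq_complex /=.
  by rewrite !mul0r subr0 addr0 ![r * _]mulrC !divfK // !eqxx.
have hc' : cos (- acos (a / r)) = a / r by rewrite cosN hc.
have hs' : sin (- acos (a / r)) = b / r.
  by rewrite sinN hs ltr0_norm ?ltNge ?hb // mulNr opprK.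
rewrite hc' hs'.
apply/eqP; rewrite eq_complex /=.
by rewrite !mul0r subr0 addr0 ![r * _]mulrC !divfK // !eqxx.
Qed.

Lemma conjE (R : realType) (z : R[i]) : Num.conj z = conjc z.
Proof. by []. Qed.

Lemma half_sq (R : realType) :
  2 * ((Num.sqrt (1/2 : R))%:C * ((Num.sqrt (1/2 : R))%:C)^*) = 1 :> R[i].
Proof.
set s := Num.sqrt _.
rewrite conjE.
have -> : (s%:C)^* = s%:C by rewrite /= oppr0.
rewrite -rmorphM -expr2 sqr_sqrtr; last by lra.
have -> : (2 : R[i]) = (2 : R)%:C by rewrite rmorph_nat.
by rewrite -rmorphM mul1r divff ?rmorph1 // pnatr_eq0.
Qed.

Lemma phase0 (R : realType) : phase (0 : R) = 1.
Proof. by rewrite /phase cos0 sin0. Qed.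

Theorem theorem1 (R : realType) (V E A : finType)
  (o : A -> V) (rev : A -> A) (edge : A -> E)
  (Hgraph : loopless_multigraph o rev edge)
  (alpha : V -> vec R A) (Halpha : forall v, unit_vector_at o v (alpha v)) :
  exists W : op R (V * E)%type (V * E)%type,
    is_extended_szegedy_W (sub_incident o edge) W /\
    (* W leaves H_{E(S(Gamma))} invariant, so W|_{H_{E(S(Gamma))}} makes sense *)
    (forall psi : vec R (V * E)%type, in_HES o edge psi -> in_HES o edge (opapply W psi)) /\
    (* U = U_eta^{-1} W|_{H_E(S)} U_eta ; U_eta^{-1} on H_{E(S)} is the adjoint *)
    flipflop_QW o rev alpha =
      opmul (adjoint (U_eta R o edge)) (opmul W (U_eta R o edge)).
Proof.
case: Hgraph => revK noloop hedge surj.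
have erev a : edge (rev a) = edge a by apply/esym/hedge; right.
have uniq a b : o a = o b -> edge a = edge b -> a = b.
  move=> ho /hedge [//|hb]; move: (noloop a); rewrite -hb ho eqxx //.
pose inc := sub_incident o edge.
have incE a v : inc v (edge a) = (v == o a) || (v == o (rev a)).
  apply/existsP/orP.
    case=> c /andP[/eqP <- /eqP hc].
    have [->|->] : c = a \/ c = rev a by apply/hedge; rewrite hc.
      by left.
    by right.
  case=> /eqP ->.
    by exists a; rewrite !eqxx.
  by exists (rev a); rewrite erev !eqxx.
pose amp (v : V) (e : E) : R[i] :=
  if [pick a | (o a == v) && (edge a == e)] is Some a then alpha v a else 0.
have ampE a : amp (o a) (edge a) = alpha (o a) a.
  rewrite /amp; case: pickP => [c /andP[/eqP hc /eqP he]|none].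
    by rewrite (uniq _ _ hc he).
  by move: (none a); rewrite !eqxx.
have amp0 v e : ~~ inc v e -> amp v e = 0.
  move=> hn; rewrite /amp; case: pickP => [c hc|//].
  by move: hn; rewrite /inc /sub_incident; case/existsP; exists c.
pose P (v : V) (e : E) : R := complex.Re (amp v e) ^+ 2 + complex.Im (amp v e) ^+ 2.
pose th (v : V) (e : E) : R := argR (amp v e).
pose Q (e : E) (v : V) : R := if inc v e then 1/2 else 0.
pose th' (v : V) (e : E) : R := 0.
have hphi x p : sz_phi P th x p = if p.1 == x then amp x p.2 else 0.
  by rewrite /sz_phi /P /th phaseK.
pose s : R[i] := (Num.sqrt (1/2 : R))%:C.
have hpsi y p : sz_psi Q th' y p = if p.2 == y then (if inc p.1 y then s else 0) else 0.
  rewrite /sz_psi /th' phase0 mulr1 /Q; case: eqP => // <-.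
  by case: (inc p.1 p.2); rewrite ?sqrtr0.
have R0E i j : reflection (sum_ketbra (sz_phi P th)) i j =
    2 * (amp i.1 i.2 * Num.conj (if j.1 == i.1 then amp i.1 j.2 else 0)) - (i == j)%:R.
  rewrite /reflection /sum_ketbra /opid; congr (2 * _ - _).
  rewrite (eq_bigr (fun x => (if i.1 == x then amp x i.2 else 0) *
       Num.conj (if j.1 == x then amp x j.2 else 0))); last by move=> x _; rewrite !hphi.
  rewrite (bigD1 i.1) //= eqxx big1 ?addr0 // => x hx.
  by rewrite eq_sym (negbTE hx) mul0r.
have R1E i j : reflection (sum_ketbra (sz_psi Q th')) i j =
    ((i.2 == j.2) && inc i.1 i.2 && inc j.1 j.2)%:R - (i == j)%:R.
  rewrite /reflection /sum_ketbra /opid; congr (_ - _).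
  rewrite (eq_bigr (fun y => (if i.2 == y then (if inc i.1 y then s else 0) else 0) *
       Num.conj (if j.2 == y then (if inc j.1 y then s else 0) else 0))); last by move=> x _; rewrite !hpsi.
  rewrite (bigD1 i.2) //= eqxx big1 ?addr0; last first.
    by move=> x hx; rewrite eq_sym (negbTE hx) mul0r.
  rewrite [j.2 == i.2]eq_sym; case: eqP => [e|ne]; last first.
    by rewrite conjE conjc0 !mulr0.
  rewrite -e /=.
 case: (inc i.1 i.2); case: (inc j.1 i.2) => /=;
    by rewrite ?half_sq ?conjE ?mulr0 ?mul0r ?conjc0 ?mulr0.
have opmulE (M1 M2 : op R (V * E)%type (V * E)%type) :
    (forall p q, ~~ inc p.1 p.2 -> inc q.1 q.2 -> M1 p q = 0) ->
    (forall p q, ~~ inc p.1 p.2 -> inc q.1 q.2 -> M2 p q = 0) ->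
    (forall p q, ~~ inc p.1 p.2 -> inc q.1 q.2 -> opmul M1 M2 p q = 0).
  move=> h1 h2 p q hp hq; rewrite /opmul big1 // => r _.
  case hr: (inc r.1 r.2); first by rewrite h1 ?mul0r.
  by rewrite h2 ?mulr0 ?hr.
have hinv (M : op R (V * E)%type (V * E)%type) :
    (forall p q, ~~ inc p.1 p.2 -> inc q.1 q.2 -> M p q = 0) ->
    forall psi, in_HES o edge psi -> in_HES o edge (opapply M psi).
  move=> hM psi hpsi0 v e; apply: contraR => hn.
  rewrite /opapply big1 ?eqxx // => [[w f]] _.
  case hq: (inc w f); first by rewrite hM ?mul0r.
  have h0 := hpsi0 w f.
  case: (psi (w, f) =P 0) => [->|/eqP h]; first by rewrite mulr0.
  by move: (h0 h); rewrite -/(inc w f) hq.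
have hR0 : forall p q, ~~ inc p.1 p.2 -> inc q.1 q.2 ->
    reflection (sum_ketbra (sz_phi P th)) p q = 0.
  move=> p q hp hq; rewrite R0E amp0 // mul0r mulr0 sub0r.
  case: eqP => [epq|_]; last by rewrite oppr0.
  by move: hp; rewrite epq hq.
have hR1 : forall p q, ~~ inc p.1 p.2 -> inc q.1 q.2 ->
    reflection (sum_ketbra (sz_psi Q th')) p q = 0.
  move=> p q hp hq; rewrite R1E (negbTE hp) andbF /= sub0r.
  case: eqP => [epq|_]; last by rewrite oppr0.
  by move: hp; rewrite epq hq.
exists (szegedy_W P Q th th'); split; last split.
- exists P, Q, th, th'; split => //.
  + split; first by move=> x y; rewrite /P addr_ge0 ?sqr_ge0.
    move=> v; apply: (@complexI R); rewrite rmorph_sum rmorph1 /=.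
    rewrite (eq_bigr (fun e => `|amp v e| ^+ 2)); last first.
      by move=> e _; rewrite /P add_Re2_Im2.
    case: (Halpha v) => _ <-.
    rewrite (partition_big edge predT) //=; apply: eq_bigr => e _.
    rewrite /amp; case: pickP => [c /andP[/eqP hc /eqP he]|none].
      rewrite (bigD1 c) /=; last by rewrite hc he !eqxx.
      rewrite big1 ?addr0 // => a /andP[/andP[/eqP ha /eqP hea] hne].
      have eac : a = c by apply: uniq; rewrite ?ha ?hc ?hea ?he.
      by rewrite eac eqxx in hne.
    rewrite big1; first by rewrite normr0 expr0n.
    by move=> a; rewrite none.
  + split; first by move=> e v; rewrite /Q; case: ifP => _; lra.
    move=> e; have [a <-] := surj e.
    rewrite (bigD1 (o a)) //= (bigD1 (o (rev a))) /=; last by rewrite noloop.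
    rewrite big1 ?addr0; last first.
      by move=> v /andP[h1 h2]; rewrite /Q incE (negbTE h1) (negbTE h2).
    rewrite /Q !incE !eqxx /= orbT; lra.
  + move=> v e hn; split; last by rewrite /Q ifN.
    by rewrite /P amp0 // /= expr0n addr0.
- move=> psi; apply: hinv; rewrite /szegedy_W; apply: opmulE; [exact: hR1 | exact: hR0].
apply: functional_extensionality => a; apply: functional_extensionality => b.
have -> : flipflop_QW o rev alpha a b = coin o alpha (rev a) b.
  rewrite /flipflop_QW /opmul /shift (bigD1 (rev a)) //= revK eqxx mul1r.
  rewrite big1 ?addr0 // => c hc.
  case: eqP => [ea|_]; last by rewrite mul0r.
  by rewrite ea revK eqxx in hc.
have -> : opmul (adjoint (U_eta R o edge)) (opmul (szegedy_W P Q th th') (U_eta R o edge)) a b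
    = szegedy_W P Q th th' (o a, edge a) (o b, edge b).
  rewrite /opmul /adjoint /U_eta (bigD1 (o a, edge a)) //= !eqxx /= oppr0 mul1r.
  rewrite [X in _ + X]big1 ?addr0; last first.
    by move=> [v e] hp; rewrite xpair_eqE in hp; rewrite /= (negbTE hp) conjc_nat mul0r.
  rewrite (bigD1 (o b, edge b)) //= !eqxx /= mulr1 big1 ?addr0 //.
  by move=> [v e] hp; rewrite xpair_eqE in hp; rewrite /= (negbTE hp) mulr0.
rewrite /szegedy_W /opmul (bigD1 (o (rev a), edge a)) //= big1 ?addr0; last first.
  move=> [w f] hr; rewrite R1E /= xpair_eqE.
  case: (eqVneq f (edge a)) => [ef|hf]; last first.
    by rewrite andbF subrr mul0r.
  rewrite ef in hr *; rewrite xpair_eqE eqxx andbT in hr.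
  rewrite !incE (eqxx (o a)) (negbTE hr) /= orbF andbT [o a == w]eq_sym subrr mul0r.
all: try done.
rewrite R1E /= xpair_eqE !incE (eqxx (o a)) (eqxx (edge a)) (eqxx (o (rev a))) orbT /=.
rewrite [o a == o (rev a)]eq_sym (negbTE (noloop a)) /= subr0 mul1r.
rewrite -(erev a); move: (rev a) => c.
rewrite R0E /= ampE /coin /grover_at.
case: (eqVneq (o c) (o b)) => [hcb|hcb].
  have ecb : (c == b) = (edge c == edge b).
    by apply/eqP/eqP => [->//|]; apply: uniq.
  by rewrite hcb ampE xpair_eqE eqxx /= ecb.
rewrite xpair_eqE (negbTE hcb) /=.
by rewrite conjE conjc0 !mulr0 subr0.
Qed.
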